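(* Let $N\ge 2$ and consider the interconnected uncertain system with state $x=(x_{11},x_{12},x_{21},x_{22},\dots,x_{N1},x_{N2})\in\mathbb{R}^{2N}$, known input $u\in\mathbb{R}^m$, unknown input $w\in\mathbb{R}^N$ and measured output $y=(x_{11},x_{21},\dots,x_{N1})^\top\in\mathbb{R}^N$, given for $i=1,\dots,N$ by \[ \dot x_{i1}=f_{i1}(y,u,x_{12},\dots,x_{(i-1)2})+g_i(y,u,t)\,x_{i2},\qquad \dot x_{i2}=f_{i2}(x,u)+\delta_i(x,u,w,t), \] where $f_{11}=f_{11}(y,u)$ (no dependence on any $x_{j2}$), the $f_{i1}$ are known continuous functions, the $f_{i2}$ are known, possibly discontinuous or multivalued functions, the $\delta_i$ are unknown uncertainty terms, and the $g_i$ are known continuous functions satisfying $0<g_{i,m}\le g_i(y,u,t)\le g_{i,M}$ for some constants $g_{i,m},g_{i,M}$. Assume the system has solutions in the sense of Filippov. Then this system is globally strongly observable.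
   Context: A system with known input $u$, unknown input (here the uncertainty terms $\delta_i$), and output $y$ is called strongly observable if the state $x$ can be recovered from the known input $u$ and the measured output $y$ together with their time derivatives, regardless of the unknown input; it is globally strongly observable if this holds on the whole state space, i.e. the map $(x,u)\mapsto(y,\dot y,\dots)$ obtained from the output and its derivatives does not depend on the unknown input and is globally invertible in $x$ for every $u\in\mathbb{R}^m$. *)

(* Defs.v *)
From HB Require Import structures.
From mathcomp Require Import all_boot all_order all_algebra.
From mathcomp Require Import all_classical all_reals topology normedtype.
Set Implicit Arguments. Unset Strict Implicit. Unset Printing Implicit Defensive.
Import Order.TTheory GRing.Theory Num.Theory.
Import numFieldNormedType.Exports.
Local Open Scope ring_scope.
Local Open Scope classical_set_scope.

(* The state x = (x_{11},x_{12},...,x_{N1},x_{N2}) is represented as the pair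
   (x1, x2) of row vectors with x1 0 i = x_{i1} and x2 0 i = x_{i2}. *)
Definition state (R : realType) (N : nat) := ('rV[R]_N * 'rV[R]_N)%type.

Definition output (R : realType) (N : nat) (x : state R N) : 'rV[R]_N := x.1.

Definition sys_field (R : realType) (N m : nat)
  (f1 : 'I_N -> 'rV[R]_N -> 'rV[R]_m -> 'rV[R]_N -> R)
  (g : 'I_N -> 'rV[R]_N -> 'rV[R]_m -> R -> R)
  (f2 : 'I_N -> state R N -> 'rV[R]_m -> set R)
  (delta : 'I_N -> state R N -> 'rV[R]_m -> 'rV[R]_N -> R -> R)
  (x : state R N) (u : 'rV[R]_m) (w : 'rV[R]_N) (t : R) : set (state R N) :=
  [set v : state R N | forall i : 'I_N,
      v.1 0 i = f1 i (output x) u x.2 + g i (output x) u t * x.2 0 i /\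
      exists a, f2 i x u a /\ v.2 0 i = a + delta i x u w t].

(* Global strong observability (with respect to the output y = x.1 and the
   unknown input given by the uncertainty terms delta together with w):
   the map (x,u,t) |-> (y, ydot), where ydot = d/dt (x.1) = v.1 for any
   admissible velocity v of the system, is the same whatever the unknown
   input (delta, w) is, and is injective in x for every known input u
   (and time t). *)
Definition globally_strongly_observable (R : realType) (N m : nat)
  (F : ((('I_N -> state R N -> 'rV[R]_m -> 'rV[R]_N -> R -> R) * 'rV[R]_N)%type) ->
       state R N -> 'rV[R]_m -> R -> set (state R N)) : Prop :=
  exists Phi : state R N -> 'rV[R]_m -> R -> ('rV[R]_N * 'rV[R]_N)%type,
    (forall d x u t v, F d x u t v -> (output x, output v) = Phi x u t) /\
    (forall (u : 'rV[R]_m) (t : R), injective (fun x => Phi x u t)).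

(* Main.v *)
Require Import Defs.
From HB Require Import structures.
From mathcomp Require Import all_boot all_order all_algebra.
From mathcomp Require Import all_classical all_reals topology normedtype.
Import Order.TTheory GRing.Theory Num.Theory.
Import numFieldNormedType.Exports.
Local Open Scope ring_scope.
Local Open Scope classical_set_scope.

Theorem proposition1 (R : realType) (N m : nat) (hN : (2 <= N)%N)
  (f1 : 'I_N -> 'rV[R]_N -> 'rV[R]_m -> 'rV[R]_N -> R)
  (g : 'I_N -> 'rV[R]_N -> 'rV[R]_m -> R -> R)
  (f2 : 'I_N -> state R N -> 'rV[R]_m -> set R)
  (* f_{i1} depends on x2 only through x_{12},...,x_{(i-1)2} *)
  (hf1dep : forall (i : 'I_N) (y : 'rV[R]_N) (u : 'rV[R]_m) (z z' : 'rV[R]_N),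
      (forall j : 'I_N, (j < i)%N -> z 0 j = z' 0 j) -> f1 i y u z = f1 i y u z')
  (hf1cont : forall i : 'I_N,
      continuous (fun p : ('rV[R]_N * 'rV[R]_m * 'rV[R]_N)%type =>
                    f1 i p.1.1 p.1.2 p.2))
  (hgcont : forall i : 'I_N,
      continuous (fun p : ('rV[R]_N * 'rV[R]_m * R)%type => g i p.1.1 p.1.2 p.2))
  (hgbnd : forall i : 'I_N, exists gm gM : R,
      0 < gm /\ forall y u t, gm <= g i y u t <= gM) :
  globally_strongly_observable
    (fun d : (('I_N -> state R N -> 'rV[R]_m -> 'rV[R]_N -> R -> R) * 'rV[R]_N)%type =>
       fun x u t => sys_field f1 g f2 d.1 x u d.2 t).
Proof.
exists (fun x u t => (x.1, \row_(i < N) (f1 i x.1 u x.2 + g i x.1 u t * x.2 0 i))).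
split.
  move=> d x u t v /= H; congr pair; apply/rowP => i; rewrite mxE.
  by case: (H i).
move=> u t [a b] [a' b'] /= [Ha Hrow]; subst a'.
have key : forall k, forall j : 'I_N, (j < k)%N -> b 0 j = b' 0 j.
  elim=> [|k IH] j // /[!ltnS] hj.
  have Hj := congr1 (fun M : 'rV[R]_N => M 0 j) Hrow; rewrite /= !mxE in Hj.
  have Hf : f1 j a u b = f1 j a u b'.
    apply: hf1dep => l hl; apply: IH; exact: leq_trans hl hj.
  rewrite Hf in Hj; move/addrI: Hj => Hj.
  have [gm [gM [gm0 hb]]] := hgbnd j.
  have /andP[h1 _] := hb a u t.
  have gj : g j a u t != 0 by rewrite gt_eqF // (lt_le_trans gm0 h1).
  exact: (mulfI gj Hj).
by congr pair; apply/rowP => j; apply: (key j.+1).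
Qed.
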